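(* Let $\mathrm{R}$ be a real closed field, $P,Q,R,S\in\mathrm{R}[X]$ with $P,Q$ not both $0$ and $R,S$ not both $0$, and $a,b\in\mathrm{R}$ with $a<b$. (i) If $a$ is a bad number for $P,Q,R,S$ and $b$ is not, then $\mathrm{Ind}_a^b(PR-QS,PS+QR)=\mathrm{Ind}_a^b(P,Q)+\mathrm{Ind}_a^b(R,S)-\tfrac12\mathrm{Sign}(PS+QR,QS,b)$. (ii) If $b$ is a bad number for $P,Q,R,S$ and $a$ is not, then $\mathrm{Ind}_a^b(PR-QS,PS+QR)=\mathrm{Ind}_a^b(P,Q)+\mathrm{Ind}_a^b(R,S)+\tfrac12\mathrm{Sign}(PS+QR,QS,a)$. (iii) If $a$ and $b$ are both bad numbers for $P,Q,R,S$, then $\mathrm{Ind}_a^b(PR-QS,PS+QR)=\mathrm{Ind}_a^b(P,Q)+\mathrm{Ind}_a^b(R,S)$.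
   Context: For nonzero $P\in\mathrm{R}[X]$ and $x\in\mathrm{R}$ write uniquely $P=(X-x)^{\mathrm{mult}_x(P)}P_x$ with $P_x(x)\neq0$. For $P\ne0$, $Q\neq0$ set $\mathrm{val}_x(P/Q)=\mathrm{mult}_x(P)-\mathrm{mult}_x(Q)$, and $\mathrm{val}_x(0/Q)=+\infty$. $\mathrm{Sign}(P,Q,x)=\mathrm{sign}(P_x(x)Q_x(x))$ if $P\ne0$, $Q\ne0$ and $\mathrm{val}_x(P/Q)=0$, and $0$ otherwise. $\mathrm{Ind}^+_x(P,Q)=\tfrac12\,\mathrm{sign}(P_x(x)Q_x(x))$ and $\mathrm{Ind}^-_x(P,Q)=\tfrac12(-1)^{\mathrm{val}_x(P/Q)}\mathrm{sign}(P_x(x)Q_x(x))$ if $P\ne0$, $Q\neq0$ and $\mathrm{val}_x(P/Q)<0$, both $0$ otherwise; $\mathrm{Ind}_x=\mathrm{Ind}^+_x-\mathrm{Ind}^-_x$; for $a<b$, $\mathrm{Ind}_a^b(P,Q)=\mathrm{Ind}_a^+(P,Q)+\sum_{x\in(a,b)}\mathrm{Ind}_x(P,Q)-\mathrm{Ind}_b^-(P,Q)$. A number $c\in\mathrm{R}$ is a bad number for $P,Q,R,S$ if $Q\ne0$, $S\neq0$, $\mathrm{val}_c(P/Q)=\mathrm{val}_c(R/S)<0$ and $\mathrm{val}_c((PS+QR)/(QS))=0$. *)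

(* Defs.v *)
From HB Require Import structures.
From mathcomp Require Import all_boot all_order all_algebra.
From mathcomp Require Import polyrcf.
Set Implicit Arguments. Unset Strict Implicit. Unset Printing Implicit Defensive.
Import Order.TTheory GRing.Theory Num.Theory.
Local Open Scope ring_scope.

Section Index.
Variable R : rcfType.
Implicit Types (P Q : {poly R}) (x a b : R).

Definition Pval P x : R := (P %/ ('X - x%:P) ^+ mup x P).[x].

(* val_x(P/Q) for Q <> 0 : None encodes +oo (case P = 0). *)
Definition valx P Q x : option int :=
  if P == 0 then None else Some ((mup x P)%:Z - (mup x Q)%:Z).

Definition SignPQ P Q x : R :=
  if (P != 0) && (Q != 0) && (valx P Q x == Some 0%Z)
  then Num.sg (Pval P x * Pval Q x) else 0.

Definition Ind_plus P Q x : R :=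
  match valx P Q x with
  | Some v => if (P != 0) && (Q != 0) && (v < 0)%R
              then 2^-1 * Num.sg (Pval P x * Pval Q x) else 0
  | None => 0
  end.

Definition Ind_minus P Q x : R :=
  match valx P Q x with
  | Some v => if (P != 0) && (Q != 0) && (v < 0)%R
              then 2^-1 * ((-1) ^+ `|v|%N * Num.sg (Pval P x * Pval Q x)) else 0
  | None => 0
  end.

Definition Ind_pt P Q x : R := Ind_plus P Q x - Ind_minus P Q x.

(* The sum over x in (a,b) has finite support: Ind_x(P,Q) <> 0 forces
   Q <> 0 and mult_x Q > mult_x P >= 0, i.e. x is a root of Q.  We sum over
   the (duplicate-free, sorted) list [roots Q a b] of roots of Q in ]a,b[
   (empty when Q = 0). *)
Definition Ind_ab P Q a b : R :=
  Ind_plus P Q a + \sum_(x <- roots Q a b) Ind_pt P Q x - Ind_minus P Q b.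

Definition bad_number P Q Rp S c : Prop :=
  Q != 0 /\ S != 0 /\
  (exists v : int, valx P Q c = Some v /\ valx Rp S c = Some v /\ (v < 0)%R) /\
  valx (P * S + Q * Rp) (Q * S) c = Some 0%Z.

End Index.

(* Main.v *)
Require Import Defs.
From HB Require Import structures.
From mathcomp Require Import all_boot all_order all_algebra.
From mathcomp Require Import polyrcf.
From mathcomp Require Import lra ring zify.
Set Implicit Arguments. Unset Strict Implicit. Unset Printing Implicit Defensive.
Import Order.TTheory GRing.Theory Num.Theory.
Local Open Scope ring_scope.


Section Basic.
Variable R : rcfType.
Implicit Types (X Y r : {poly R}) (x : R).

Lemma decomp X x : X != 0 ->
  exists2 r, ~~ root r x & X = r * ('X - x%:P) ^+ mup x X.
Proof.
move=> X0; have [m [r]] := multiplicity_XsubC X x; rewrite X0 /= => rNx XE.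
have -> : mup x X = m by rewrite XE mupMr // mup_XsubCX eqxx.
by exists r.
Qed.

Lemma mup_char X r m x : ~~ root r x -> X = r * ('X - x%:P) ^+ m -> mup x X = m.
Proof. by move=> rNx ->; rewrite mupMr // mup_XsubCX eqxx. Qed.

Lemma Pval_char X r m x : ~~ root r x -> X = r * ('X - x%:P) ^+ m -> Pval X x = r.[x].
Proof.
move=> rNx XE; rewrite /Pval (mup_char rNx XE) XE mulpK //.
by rewrite expf_neq0 // polyXsubC_eq0.
Qed.

Lemma Pval0 x : Pval 0 x = 0.
Proof. by rewrite /Pval div0p horner0. Qed.

Lemma Pval_neq0 X x : X != 0 -> Pval X x != 0.
Proof. by move=> /(decomp x) [r rNx XE]; rewrite (Pval_char rNx XE). Qed.

Lemma PvalM X Y x : X != 0 -> Y != 0 -> Pval (X * Y) x = Pval X x * Pval Y x.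
Proof.
move=> /(decomp x) [r1 r1N E1] /(decomp x) [r2 r2N E2].
rewrite (Pval_char r1N E1) (Pval_char r2N E2) (@Pval_char _ (r1 * r2) (mup x X + mup x Y)).
- by rewrite hornerM.
- by rewrite rootM negb_or r1N r2N.
- by rewrite {1}E1 {1}E2 exprD; rewrite -!mulrA; congr (_ * _); rewrite mulrC -!mulrA; congr (_ * _); rewrite mulrC.
Qed.

Lemma mupN X x : mup x (- X) = mup x X.
Proof.
have [->|X0] := eqVneq X 0; first by rewrite oppr0.
have [r rN E] := decomp x X0.
apply: (@mup_char _ (- r)); first by rewrite rootN.
by rewrite {1}E mulNr.
Qed.

Lemma PvalN X x : Pval (- X) x = - Pval X x.
Proof.
have [->|X0] := eqVneq X 0; first by rewrite oppr0 Pval0 oppr0.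
have [r rN E] := decomp x X0.
rewrite (Pval_char rN E) (@Pval_char _ (- r) (mup x X)) ?rootN ?hornerN //.
by rewrite {1}E mulNr.
Qed.

Lemma mup_min X Y x : X + Y != 0 -> (minn (mup x X) (mup x Y) <= mup x (X + Y))%N.
Proof.
move=> XY0.
have [X0|X0] := eqVneq X 0.
  by rewrite X0 add0r in XY0 *; apply: geq_minr.
have [Y0|Y0] := eqVneq Y 0.
  by rewrite Y0 addr0 in XY0 *; apply: geq_minl.
rewrite mup_geq //; have := geq_minr (mup x X) (mup x Y); have := geq_minl (mup x X) (mup x Y).
by rewrite !mup_geq // => h1 h2; exact: dvdp_add.
Qed.

Lemma add_mup_lt X Y x : X != 0 -> Y != 0 -> (mup x X < mup x Y)%N ->
  [/\ X + Y != 0, mup x (X + Y) = mup x X & Pval (X + Y) x = Pval X x].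
Proof.
move=> X0 Y0 lt; have [r1 r1N E1] := decomp x X0; have [r2 r2N E2] := decomp x Y0.
set k := (mup x Y - mup x X)%N.
have E : X + Y = (r1 + r2 * ('X - x%:P) ^+ k) * ('X - x%:P) ^+ mup x X.
  rewrite mulrDl -mulrA -exprD subnK ?(ltnW lt) //.
  by rewrite -E1 -E2.
have rN : ~~ root (r1 + r2 * ('X - x%:P) ^+ k) x.
  rewrite /root !hornerE subrr expr0n /=.
  have -> : (k == 0%N) = false by rewrite /k subn_eq0 leqNgt lt.
  by rewrite mulr0 addr0.
split.
- rewrite E mulf_neq0 ?expf_neq0 ?polyXsubC_eq0 //.
  by apply: contraNneq rN => ->; rewrite root0.
- exact: mup_char rN E.
- by rewrite (Pval_char rN E) (Pval_char r1N E1) !hornerE subrr expr0n /= /k subn_eq0 leqNgt lt mulr0 addr0.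
Qed.

Lemma add_mup_eq X Y x : X != 0 -> Y != 0 -> mup x X = mup x Y ->
  Pval X x + Pval Y x != 0 ->
  [/\ X + Y != 0, mup x (X + Y) = mup x X & Pval (X + Y) x = Pval X x + Pval Y x].
Proof.
move=> X0 Y0 eqm; have [r1 r1N E1] := decomp x X0; have [r2 r2N E2] := decomp x Y0.
rewrite (Pval_char r1N E1) (Pval_char r2N E2) => s0.
have E : X + Y = (r1 + r2) * ('X - x%:P) ^+ mup x X.
  by rewrite mulrDl {1}E1 {1}E2 eqm.
have rN : ~~ root (r1 + r2) x by rewrite /root hornerD.
split.
- rewrite E mulf_neq0 ?expf_neq0 ?polyXsubC_eq0 //.
  by apply: contraNneq rN => ->; rewrite root0.
- exact: mup_char rN E.
- by rewrite (Pval_char rN E) hornerD.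
Qed.

Lemma add_mup_eq0 X Y x : X != 0 -> Y != 0 -> mup x X = mup x Y ->
  Pval X x + Pval Y x = 0 -> X + Y != 0 -> (mup x X < mup x (X + Y))%N.
Proof.
move=> X0 Y0 eqm; have [r1 r1N E1] := decomp x X0; have [r2 r2N E2] := decomp x Y0.
rewrite (Pval_char r1N E1) (Pval_char r2N E2) => s0 XY0.
have E : X + Y = (r1 + r2) * ('X - x%:P) ^+ mup x X.
  by rewrite mulrDl {1}E1 {1}E2 eqm.
have r0 : r1 + r2 != 0 by apply: contraNneq XY0 => h; rewrite E h mul0r.
rewrite E mupM ?expf_neq0 ?polyXsubC_eq0 // mup_XsubCX eqxx -{1}(add0n (mup x X)) ltn_add2r.
by rewrite -XsubC_dvd // dvdp_XsubCl /root hornerD s0.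
Qed.

End Basic.


Section Core.
Variable R : rcfType.
Variable x : R.
Variable pv : {poly R} -> R.
Implicit Types (X Y D P Q Rp S : {poly R}).
Hypothesis pv0 : pv 0 = 0.
Hypothesis pv_neq0 : forall X, X != 0 -> pv X != 0.
Hypothesis pvM : forall X Y, X != 0 -> Y != 0 -> pv (X * Y) = pv X * pv Y.
Hypothesis pvN : forall X, pv (- X) = - pv X.
Hypothesis mupN : forall X, mup x (- X) = mup x X.
Hypothesis Hlt : forall X Y, X != 0 -> Y != 0 -> (mup x X < mup x Y)%N ->
  [/\ X + Y != 0, mup x (X + Y) = mup x X & pv (X + Y) = pv X].
Hypothesis Heq : forall X Y, X != 0 -> Y != 0 -> mup x X = mup x Y ->
  pv X + pv Y != 0 ->
  [/\ X + Y != 0, mup x (X + Y) = mup x X & pv (X + Y) = pv X + pv Y].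
Hypothesis Heq0 : forall X Y, X != 0 -> Y != 0 -> mup x X = mup x Y ->
  pv X + pv Y = 0 -> X + Y != 0 -> (mup x X < mup x (X + Y))%N.
Hypothesis Hmin : forall X Y, X + Y != 0 ->
  (minn (mup x X) (mup x Y) <= mup x (X + Y))%N.

Definition IP X Y : R :=
  if (X != 0) && (Y != 0) && (mup x X < mup x Y)%N
  then 2^-1 * Num.sg (pv X * pv Y) else 0.
Definition SG X Y : R :=
  if (X != 0) && (Y != 0) && (mup x X == mup x Y)
  then Num.sg (pv X * pv Y) else 0.
Definition badm P Q Rp S : bool :=
  [&& P != 0, Q != 0, Rp != 0, S != 0,
      (mup x P + mup x S == mup x Rp + mup x Q)%N, (mup x P < mup x Q)%N,
      P * S + Q * Rp != 0 & mup x (P * S + Q * Rp) == mup x (Q * S)].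

Lemma IP0l Y : IP 0 Y = 0. Proof. by rewrite /IP eqxx. Qed.
Lemma IP0r X : IP X 0 = 0. Proof. by rewrite /IP eqxx andbF. Qed.
Lemma SG0l Y : SG 0 Y = 0. Proof. by rewrite /SG eqxx. Qed.
Lemma SG0r X : SG X 0 = 0. Proof. by rewrite /SG eqxx andbF. Qed.

Lemma IP_nz X Y : X != 0 -> Y != 0 ->
  IP X Y = if (mup x X < mup x Y)%N then 2^-1 * Num.sg (pv X * pv Y) else 0.
Proof. by move=> X0 Y0; rewrite /IP X0 Y0. Qed.
Lemma SG_nz X Y : X != 0 -> Y != 0 ->
  SG X Y = if (mup x X == mup x Y) then Num.sg (pv X * pv Y) else 0.
Proof. by move=> X0 Y0; rewrite /SG X0 Y0. Qed.

Lemma sgsq (z : R) : z != 0 -> Num.sg (z * z) = 1.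
Proof. by move=> z0; rewrite sgrM; case: (ltrgtP z 0) z0 => [h|h|->]; rewrite ?eqxx // ?(ltr0_sg h) ?(gtr0_sg h) ?mulrNN mulr1. Qed.

Lemma IP_scale D X Y : D != 0 -> IP (D * X) (D * Y) = IP X Y.
Proof.
move=> D0; have [->|X0] := eqVneq X 0; first by rewrite mulr0 !IP0l.
have [->|Y0] := eqVneq Y 0; first by rewrite mulr0 !IP0r.
rewrite !IP_nz ?mulf_neq0 // !mupM // ltn_add2l !pvM //.
have -> : pv D * pv X * (pv D * pv Y) = (pv D * pv D) * (pv X * pv Y) by ring.
by rewrite sgrM sgsq ?mul1r // pv_neq0.
Qed.

Lemma SG_scale D X Y : D != 0 -> SG (D * X) (D * Y) = SG X Y.
Proof.
move=> D0; have [->|X0] := eqVneq X 0; first by rewrite mulr0 !SG0l.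
have [->|Y0] := eqVneq Y 0; first by rewrite mulr0 !SG0r.
rewrite !SG_nz ?mulf_neq0 // !mupM // eqn_add2l !pvM //.
have -> : pv D * pv X * (pv D * pv Y) = (pv D * pv D) * (pv X * pv Y) by ring.
by rewrite sgrM sgsq ?mul1r // pv_neq0.
Qed.

Lemma sg_pm (z : R) : z != 0 -> Num.sg z = 1 \/ Num.sg z = -1.
Proof. by case: (ltrgtP z 0) => [h|h|->]; rewrite ?eqxx // ?(ltr0_sg h) ?(gtr0_sg h); auto. Qed.

Lemma L0 X Y : X != 0 -> Y != 0 ->
  IP (- Y) X - IP X Y = - 2^-1 * Num.sg (pv X * pv Y) + 2^-1 * SG X Y.
Proof.
move=> X0 Y0; rewrite !IP_nz ?oppr_eq0 // SG_nz // mupN pvN.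
case: (ltngtP (mup x X) (mup x Y)) => h.
- ring.
- rewrite mulNr sgrN [pv Y * _]mulrC; ring.
- ring.
Qed.


Lemma sg_add_same (a b : R) : 0 < a * b -> Num.sg (a + b) = Num.sg a.
Proof.
move=> ab; case: (ltrgtP a 0) => ha.
- have hb : b < 0 by rewrite -(nmulr_rgt0 _ ha).
  have hab : a + b < 0 by lra.
  by rewrite !ltr0_sg.
- have hb : 0 < b by rewrite -(pmulr_rgt0 _ ha).
  have hab : 0 < a + b by lra.
  by rewrite !gtr0_sg.
- by move: ab; rewrite ha mul0r ltxx.
Qed.

Lemma sg_opp_prod (a b : R) : a * b < 0 -> Num.sg a = - Num.sg b.
Proof.
move=> ab; case: (ltrgtP a 0) => ha.
- have hb : 0 < b by rewrite -(nmulr_rlt0 _ ha).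
  by rewrite ltr0_sg // gtr0_sg.
- have hb : b < 0 by rewrite -(pmulr_rlt0 _ ha).
  by rewrite gtr0_sg // ltr0_sg // opprK.
- by move: ab; rewrite ha mul0r ltxx.
Qed.

Lemma one_neq_m1 : (1 : R) = -1 -> False.
Proof. by move=> h; have := ltr01 (R := R); rewrite h; lra. Qed.
Lemma m1_neq_one : (-1 : R) = 1 -> False.
Proof. by move=> h; apply: one_neq_m1. Qed.

Ltac fins := let h := fresh "h" in move=> h;
  rewrite ?mulr1 ?mul1r ?mulrN1 ?mulN1r ?opprK in h;
  first [ exfalso; exact: one_neq_m1 h | exfalso; exact: m1_neq_one h | ring ].

Ltac splitsg p0 q0 r0 s0 :=
  let h1 := fresh "sp" in let h2 := fresh "sq" in
  let h3 := fresh "sr" in let h4 := fresh "ss" in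
  case: (sg_pm p0) => h1; rewrite ?h1; case: (sg_pm q0) => h2; rewrite ?h2;
  case: (sg_pm r0) => h3; rewrite ?h3; case: (sg_pm s0) => h4; rewrite ?h4.

Lemma core P Q Rp S : (P != 0) || (Q != 0) -> (Rp != 0) || (S != 0) ->
  IP (P * Rp - Q * S) (P * S + Q * Rp) =
  IP P Q + IP Rp S - 2^-1 * Num.sg (pv ((P * S + Q * Rp) * (Q * S)))
  + 2^-1 * (if badm P Q Rp S then 0 else SG (P * S + Q * Rp) (Q * S)).
Proof.
move=> hPQ hRS.
have [Q0|Q0] := eqVneq Q 0.
  rewrite Q0 eqxx orbF in hPQ *.
  have -> : badm P 0 Rp S = false by rewrite /badm eqxx /= andbF.
  by rewrite !mul0r subr0 addr0 mulr0 pv0 sgr0 SG0r IP0r IP_scale //; ring.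
have [S0|S0] := eqVneq S 0.
  rewrite S0 eqxx orbF in hRS *.
  have -> : badm P Q Rp 0 = false by rewrite /badm eqxx /= !andbF.
  rewrite !mulr0 subr0 add0r pv0 sgr0 SG0r IP0r.
  by rewrite [P * _]mulrC [Q * _]mulrC IP_scale //; ring.
have [P0|P0] := eqVneq P 0.
  rewrite P0; have -> : badm 0 Q Rp S = false by rewrite /badm eqxx.
  rewrite !mul0r !add0r IP0l.
  have [R0|R0] := eqVneq Rp 0.
    by rewrite R0 mulr0 mul0r pv0 sgr0 IP0r IP0l SG0l; ring.
  rewrite -mulrN IP_scale // SG_scale // !pvM ?mulf_neq0 //.
  have -> : pv Q * pv Rp * (pv Q * pv S) = (pv Q * pv Q) * (pv Rp * pv S) by ring.
  rewrite sgrM sgsq ?pv_neq0 // mul1r.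
  have := L0 R0 S0; move=> h; rewrite -[IP (- S) Rp](subrK (IP Rp S)) h; ring.
have [R0|R0] := eqVneq Rp 0.
  rewrite R0; have -> : badm P Q 0 S = false by rewrite /badm eqxx /= !andbF.
  rewrite !mulr0 addr0 sub0r IP0l.
  rewrite -mulNr [P * S]mulrC [- Q * S]mulrC [Q * S]mulrC IP_scale // SG_scale //.
  rewrite !pvM ?mulf_neq0 //.
  have -> : pv S * pv P * (pv S * pv Q) = (pv S * pv S) * (pv P * pv Q) by ring.
  rewrite sgrM sgsq ?pv_neq0 // mul1r.
  have := L0 P0 Q0; move=> h; rewrite -[IP (- Q) P](subrK (IP P Q)) h; ring.
have p0 := pv_neq0 P0; have q0 := pv_neq0 Q0.
have r0 := pv_neq0 R0; have s0 := pv_neq0 S0.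
have PR0 : P * Rp != 0 by rewrite mulf_neq0.
have QS0 : Q * S != 0 by rewrite mulf_neq0.
have PS0 : P * S != 0 by rewrite mulf_neq0.
have QR0 : Q * Rp != 0 by rewrite mulf_neq0.
have NQS0 : - (Q * S) != 0 by rewrite oppr_eq0.
have mPR := mupM x P0 R0; have mQS := mupM x Q0 S0.
have mPS := mupM x P0 S0; have mQR := mupM x Q0 R0.
have mNQS : mup x (- (Q * S)) = (mup x Q + mup x S)%N by rewrite mupN.
have pPR := pvM P0 R0; have pQS := pvM Q0 S0.
have pPS := pvM P0 S0; have pQR := pvM Q0 R0.
have pNQS : pv (- (Q * S)) = - (pv Q * pv S) by rewrite pvN pQS.
set A := P * Rp - Q * S; set B := P * S + Q * Rp.
have pU : pv (B * (Q * S)) = pv B * (pv Q * pv S).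
  have [->|B0] := eqVneq B 0; first by rewrite mul0r pv0 mul0r.
  by rewrite pvM // pQS.
rewrite pU.
case: (ltnP (mup x P) (mup x Q)) => hPQm; case: (ltnP (mup x Rp) (mup x S)) => hRSm.
-
  have [A0 mA pA] : [/\ A != 0, mup x A = mup x (P * Rp) & pv A = pv (P * Rp)].
    have hlt : (mup x (P * Rp) < mup x (- (Q * S)))%N.
      rewrite mNQS mPR; clear - hPQm hRSm; lia.
    exact: Hlt PR0 NQS0 hlt.
  rewrite (IP_nz P0 Q0) (IP_nz R0 S0) hPQm hRSm.
  case: (ltngtP (mup x (P * S)) (mup x (Q * Rp))) => hB.
  + have [B0 mB pB] := Hlt PS0 QR0 hB.
    have -> : badm P Q Rp S = false.
      have hne : (mup x P + mup x S == mup x Rp + mup x Q)%N = false.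
        by apply/negbTE/eqP; move: hB; rewrite mPS mQR; clear - hPQm hRSm; lia.
      by rewrite /badm hne /= !andbF.
    rewrite (SG_nz B0 QS0) mB mPS mQS eqn_add2r (ltn_eqF hPQm).
    rewrite (IP_nz A0 B0) mA mB mPR mPS ltn_add2l hRSm pA pB pPR pPS !sgrM.
    by splitsg p0 q0 r0 s0; ring.
  + have [B0 mB pB] := Hlt QR0 PS0 hB; rewrite addrC in B0 mB pB.
    have -> : badm P Q Rp S = false.
      have hne : (mup x P + mup x S == mup x Rp + mup x Q)%N = false.
        by apply/negbTE/eqP; move: hB; rewrite mPS mQR; clear - hPQm hRSm; lia.
      by rewrite /badm hne /= !andbF.
    rewrite (SG_nz B0 QS0) mB mQR mQS eqn_add2l (ltn_eqF hRSm).
    rewrite (IP_nz A0 B0) mA mB mPR mQR ltn_add2r hPQm pA pB pPR pQR !sgrM.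
    by splitsg p0 q0 r0 s0; ring.
  + have [hs|hs] := eqVneq (pv (P * S) + pv (Q * Rp)) 0.
    * have hps : Num.sg (pv P * pv S) = - Num.sg (pv Q * pv Rp).
        by rewrite -sgrN -pPS -pQR; congr Num.sg; apply/eqP; rewrite -addr_eq0 hs.
      move: hps; rewrite !sgrM => hps.
      have [B0|B0] := eqVneq B 0.
        rewrite B0 IP0r SG0l pv0 sgr0 if_same.
        move: hps.
        by splitsg p0 q0 r0 s0; fins.
      have mB := Heq0 PS0 QR0 hB hs B0.
      rewrite (IP_nz A0 B0) mA -/B.
      have -> : (mup x (P * Rp) < mup x B)%N by rewrite (ltn_trans _ mB) // mPR mPS ltn_add2l.
      have -> : (if badm P Q Rp S then 0 else SG B (Q * S)) = 0.
        case: ifP => // hb; rewrite (SG_nz B0 QS0); case: eqP => // hm.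
        have hq : (mup x P + mup x S == mup x Rp + mup x Q)%N.
          by apply/eqP; move: hB; rewrite mPS mQR; clear - hPQm; lia.
        by move: hb; rewrite /badm P0 Q0 R0 S0 hPQm hq -/B B0 hm eqxx.
      rewrite pA pPR !sgrM; move: hps.
      by case: (sg_pm (pv_neq0 B0)) => ->; splitsg p0 q0 r0 s0; fins.
    * have [B0 mB pB] := Heq PS0 QR0 hB hs.
      rewrite (IP_nz A0 B0) mA mB mPR mPS ltn_add2l hRSm pA pB.
      have -> : (if badm P Q Rp S then 0 else SG B (Q * S)) = 0.
        case: ifP => // hb; rewrite (SG_nz B0 QS0) mB mPS mQS eqn_add2r (ltn_eqF hPQm) //.
      rewrite pPS pQR pPR in hs *.
      have [e|e] : Num.sg (pv P * pv Q) = Num.sg (pv Rp * pv S) \/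
                   Num.sg (pv P * pv Q) = - Num.sg (pv Rp * pv S).
        by rewrite !sgrM; splitsg p0 q0 r0 s0; rewrite ?mulr1 ?mulrN ?mul1r ?mulN1r ?opprK; auto.
      - have hsum : Num.sg (pv P * pv S + pv Q * pv Rp) = Num.sg (pv P * pv S).
          apply: sg_add_same.
          have -> : pv P * pv S * (pv Q * pv Rp) = (pv P * pv Q) * (pv Rp * pv S) by ring.
          rewrite -sgr_gt0 sgrM e -sgrM sgsq ?ltr01 // mulf_neq0 //.
        rewrite !sgrM hsum !sgrM; move: e; rewrite !sgrM.
        by splitsg p0 q0 r0 s0; fins.
      - rewrite !sgrM; move: e; rewrite !sgrM.
        by case: (sg_pm hs) => ->; splitsg p0 q0 r0 s0; fins.
-
  have hB : (mup x (P * S) < mup x (Q * Rp))%N by rewrite mPS mQR; clear - hPQm hRSm; lia.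
  have [B0 mB pB] := Hlt PS0 QR0 hB.
  have -> : badm P Q Rp S = false.
    have hne : (mup x P + mup x S == mup x Rp + mup x Q)%N = false.
      by apply/negbTE/eqP; move: hB; rewrite mPS mQR; clear - hPQm hRSm; lia.
    by rewrite /badm hne /= !andbF.
  rewrite (SG_nz B0 QS0) mB mPS mQS eqn_add2r (ltn_eqF hPQm).
  rewrite (IP_nz P0 Q0) (IP_nz R0 S0) hPQm ltnNge hRSm /=.
  have -> : IP A B = 0.
    have [->|A0] := eqVneq A 0; first by rewrite IP0l.
    rewrite (IP_nz A0 B0); have := @Hmin (P * Rp) (- (Q * S)) A0; rewrite -/A mPR mNQS mB mPS.
    by case: ifP => // h1 h2; exfalso; move: h1 h2; clear - hPQm hRSm; lia.
  rewrite pB pPS !sgrM; by splitsg p0 q0 r0 s0; ring.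
-
  have hB : (mup x (Q * Rp) < mup x (P * S))%N by rewrite mPS mQR; clear - hPQm hRSm; lia.
  have [B0 mB pB] := Hlt QR0 PS0 hB; rewrite addrC in B0 mB pB.
  have -> : badm P Q Rp S = false by rewrite /badm ltnNge hPQm /= !andbF.
  rewrite (SG_nz B0 QS0) mB mQR mQS eqn_add2l (ltn_eqF hRSm).
  rewrite (IP_nz P0 Q0) (IP_nz R0 S0) hRSm ltnNge hPQm /=.
  have -> : IP A B = 0.
    have [->|A0] := eqVneq A 0; first by rewrite IP0l.
    rewrite (IP_nz A0 B0); have := @Hmin (P * Rp) (- (Q * S)) A0; rewrite -/A mPR mNQS mB mQR.
    by case: ifP => // h1 h2; exfalso; move: h1 h2; clear - hPQm hRSm; lia.
  rewrite pB pQR !sgrM; by splitsg p0 q0 r0 s0; ring.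
-
  have -> : badm P Q Rp S = false by rewrite /badm ltnNge hPQm /= !andbF.
  rewrite (IP_nz P0 Q0) (IP_nz R0 S0) !ltnNge hRSm hPQm /=.
  have [B0|B0] := eqVneq B 0.
    by rewrite B0 IP0r SG0l pv0 !mul0r sgr0; ring.
  have hmB : (mup x (Q * S) <= mup x B)%N.
    by have := @Hmin (P * S) (Q * Rp) B0; rewrite -/B mPS mQR mQS; clear - hPQm hRSm; lia.
  rewrite (SG_nz B0 QS0).
  case: (ltngtP (mup x B) (mup x (Q * S))) => hBm.
  + by exfalso; move: hBm hmB; clear - hPQm hRSm; lia.
  + have [A0 mA sA] : [/\ A != 0, mup x A = mup x (Q * S) &
                        Num.sg (pv A) = - Num.sg (pv Q * pv S)].
      have [hlt|heq] : (mup x Q + mup x S < mup x P + mup x Rp)%N \/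
                       (mup x P = mup x Q /\ mup x Rp = mup x S) by clear - hPQm hRSm; lia.
      * have [A0 mA pA] := Hlt NQS0 PR0 ltac:(by rewrite mPR mNQS).
        rewrite addrC in A0 mA pA; rewrite /A; split => //.
          by rewrite mA mNQS mQS.
        by rewrite pA pNQS sgrN.
      * case: heq => e1 e2.
        have hs : pv (P * S) + pv (Q * Rp) = 0.
          apply/eqP; apply: contraTT hBm => hs.
          have [_ mB _] := Heq PS0 QR0 ltac:(by rewrite mPS mQR e1 e2 addnC) hs.
          by rewrite -/B mB mPS mQS e1 ltnn.
        rewrite pPS pQR in hs.
        have e3 : pv P * pv Rp * (pv Q * pv S) = - (pv Q * pv Rp) ^+ 2.
          have -> : pv P * pv Rp * (pv Q * pv S) = (pv P * pv S) * (pv Q * pv Rp) by ring.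
          by rewrite (_ : pv P * pv S = - (pv Q * pv Rp)) ?mulNr -?expr2 //; apply/eqP; rewrite -addr_eq0 hs.
        have hA : pv (P * Rp) + pv (- (Q * S)) != 0.
          rewrite pPR pNQS subr_eq0; apply/eqP => e4.
          move: e3; rewrite e4 => e3.
          have : (pv Q * pv S) ^+ 2 + (pv Q * pv Rp) ^+ 2 == 0 by rewrite expr2 e3 addNr.
          rewrite paddr_eq0 ?sqr_ge0 // !sqrf_eq0 !mulf_eq0 (negPf q0) (negPf s0) /=.
          by [].
        have [A0 mA pA] := Heq PR0 NQS0 ltac:(by rewrite mPR mNQS e1 e2) hA.
        split => //; first by rewrite /A mA mPR mQS e1 e2.
        rewrite /A pA pPR pNQS; apply: sg_opp_prod.
        have -> : (pv P * pv Rp + - (pv Q * pv S)) * (pv Q * pv S) =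
                  - ((pv Q * pv Rp) ^+ 2 + (pv Q * pv S) ^+ 2) by rewrite mulrDl e3; ring.
        rewrite oppr_lt0 ltr_pwDl ?sqr_ge0 // exprn_even_gt0 //= mulf_neq0 //.
    rewrite (IP_nz A0 B0) mA hBm !sgrM sA sgrM; ring.
  + have -> : IP A B = 0.
      have [->|A0] := eqVneq A 0; first by rewrite IP0l.
      rewrite (IP_nz A0 B0); have := @Hmin (P * Rp) (- (Q * S)) A0; rewrite -/A mPR mNQS hBm mQS.
      by case: ifP => // h1 h2; exfalso; move: h1 h2; clear - hPQm hRSm; lia.
    rewrite pQS; ring.
Qed.

End Core.


Section Glob.
Variable R : rcfType.
Implicit Types (X Y U T P Q Rp S : {poly R}) (x a b c : R).

Definition Pl X x : R := (-1) ^+ mup x X * Pval X x.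

Lemma Pl0 x : Pl 0 x = 0. Proof. by rewrite /Pl Pval0 mulr0. Qed.
Lemma Pl_neq0 X x : X != 0 -> Pl X x != 0.
Proof. by move=> X0; rewrite /Pl mulf_neq0 ?Pval_neq0 // signr_eq0. Qed.
Lemma PlM X Y x : X != 0 -> Y != 0 -> Pl (X * Y) x = Pl X x * Pl Y x.
Proof. by move=> X0 Y0; rewrite /Pl mupM // PvalM // exprD; ring. Qed.
Lemma PlN X x : Pl (- X) x = - Pl X x.
Proof. by rewrite /Pl mupN PvalN mulrN. Qed.

Lemma Pl_lt X Y x : X != 0 -> Y != 0 -> (mup x X < mup x Y)%N ->
  [/\ X + Y != 0, mup x (X + Y) = mup x X & Pl (X + Y) x = Pl X x].
Proof. by move=> X0 Y0 h; have [h1 h2 h3] := add_mup_lt X0 Y0 h; rewrite /Pl h2 h3. Qed.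

Lemma Pl_eq X Y x : X != 0 -> Y != 0 -> mup x X = mup x Y ->
  Pl X x + Pl Y x != 0 ->
  [/\ X + Y != 0, mup x (X + Y) = mup x X & Pl (X + Y) x = Pl X x + Pl Y x].
Proof.
move=> X0 Y0 e; rewrite /Pl -e -mulrDr mulf_eq0 negb_or => /andP[_ h].
by have [h1 h2 h3] := add_mup_eq X0 Y0 e h; rewrite h2 h3.
Qed.

Lemma Pl_eq0 X Y x : X != 0 -> Y != 0 -> mup x X = mup x Y ->
  Pl X x + Pl Y x = 0 -> X + Y != 0 -> (mup x X < mup x (X + Y))%N.
Proof.
move=> X0 Y0 e; rewrite /Pl -e -mulrDr => /eqP; rewrite mulf_eq0 signr_eq0 /= => /eqP h.
exact: add_mup_eq0.
Qed.

Definition pvr x := fun Z : {poly R} => Pval Z x.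
Definition pvl x := fun Z : {poly R} => Pl Z x.

Lemma coreR x P Q Rp S : (P != 0) || (Q != 0) -> (Rp != 0) || (S != 0) ->
  IP x (pvr x) (P * Rp - Q * S) (P * S + Q * Rp) =
  IP x (pvr x) P Q + IP x (pvr x) Rp S - 2^-1 * Num.sg (Pval ((P * S + Q * Rp) * (Q * S)) x)
  + 2^-1 * (if badm x P Q Rp S then 0 else SG x (pvr x) (P * S + Q * Rp) (Q * S)).
Proof.
apply: (@core R x (pvr x)).
- exact: Pval0.
- by move=> X; apply: Pval_neq0.
- by move=> X Y; apply: PvalM.
- by move=> X; apply: PvalN.
- by move=> X; apply: mupN.
- by move=> X Y; apply: add_mup_lt.
- by move=> X Y; apply: add_mup_eq.
- by move=> X Y; apply: add_mup_eq0.
- by move=> X Y; apply: mup_min.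
Qed.

Lemma coreL x P Q Rp S : (P != 0) || (Q != 0) -> (Rp != 0) || (S != 0) ->
  IP x (pvl x) (P * Rp - Q * S) (P * S + Q * Rp) =
  IP x (pvl x) P Q + IP x (pvl x) Rp S - 2^-1 * Num.sg (Pl ((P * S + Q * Rp) * (Q * S)) x)
  + 2^-1 * (if badm x P Q Rp S then 0 else SG x (pvl x) (P * S + Q * Rp) (Q * S)).
Proof.
apply: (@core R x (pvl x)).
- exact: Pl0.
- by move=> X; apply: Pl_neq0.
- by move=> X Y; apply: PlM.
- by move=> X; apply: PlN.
- by move=> X; apply: mupN.
- by move=> X Y; apply: Pl_lt.
- by move=> X Y; apply: Pl_eq.
- by move=> X Y; apply: Pl_eq0.
- by move=> X Y; apply: mup_min.
Qed.

End Glob.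


Section Bridge.
Variable R : rcfType.
Implicit Types (X Y U T P Q Rp S : {poly R}) (x a b c : R).

Lemma sg_sign k : Num.sg ((-1) ^+ k : R) = (-1) ^+ k.
Proof. by rewrite -signr_odd; case: (odd k); rewrite ?expr1 ?expr0 ?sgrN1 ?sgr1. Qed.

Lemma rearr (e px s py : R) : e * px * (e * s * py) = (e * e) * (s * (px * py)).
Proof. by ring. Qed.
Lemma rearr2 (e px py : R) : e * px * (e * py) = (e * e) * (px * py).
Proof. by ring. Qed.

Lemma Ind_plusE X Y x : Ind_plus X Y x = IP x (pvr x) X Y.
Proof.
rewrite /Ind_plus /IP /valx; have [->|X0] := eqVneq X 0; first by [].
by rewrite /= subr_lt0 ltz_nat /pvr.
Qed.

Lemma Ind_minusE X Y x : Ind_minus X Y x = IP x (pvl x) X Y.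
Proof.
rewrite /Ind_minus /IP /valx /pvl /Pl; have [->|X0] := eqVneq X 0; first by [].
rewrite /= subr_lt0 ltz_nat; case: ifP => // /andP[_ h]; congr (_ * _).
rewrite distnEr; last exact: ltnW.
rewrite -(subnKC (ltnW h)) exprD addKn.
set k := (mup x Y - mup x X)%N; set e := (-1) ^+ mup x X.
set px := Pval X x; set py := Pval Y x.
rewrite rearr -expr2 /e sqrr_sign mul1r.
by rewrite [RHS]sgrM sg_sign.
Qed.

Lemma SignPQE X Y x : SignPQ X Y x = SG x (pvr x) X Y.
Proof.
rewrite /SignPQ /SG /valx /pvr; have [->|X0] := eqVneq X 0; first by [].
by rewrite /= (inj_eq (@Some_inj _)) subr_eq0 eqz_nat.
Qed.

Lemma SG_lr X Y x : SG x (pvl x) X Y = SG x (pvr x) X Y.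
Proof.
rewrite /SG /pvl /pvr /Pl; case: ifP => // /andP[_ /eqP h]; rewrite h.
set e := (-1) ^+ mup x Y; set px := Pval X x; set py := Pval Y x.
rewrite rearr2.
by rewrite -expr2 /e sqrr_sign mul1r.
Qed.

Lemma badE P Q Rp S c : bad_number P Q Rp S c <-> badm c P Q Rp S.
Proof.
rewrite /bad_number /badm /valx; split.
- case=> Q0 [S0 [[v [hv1 [hv2 hv]]] hB]].
  have P0 : P != 0 by apply/negP => /eqP P0; move: hv1; rewrite P0 eqxx.
  have R0 : Rp != 0 by apply/negP => /eqP R0; move: hv2; rewrite R0 eqxx.
  have B0 : P * S + Q * Rp != 0 by apply/negP => /eqP B0; move: hB; rewrite B0 eqxx.
  move: hv1 hv2 hB; rewrite (negPf P0) (negPf R0) (negPf B0) => -[e1] [e2] [e3].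
  rewrite Q0 S0 /=.
  have -> : (mup c P < mup c Q)%N by rewrite -ltz_nat -subr_lt0 e1.
  have -> : (mup c (P * S + Q * Rp) == mup c (Q * S)) by rewrite -eqz_nat -subr_eq0 e3.
  rewrite andbT; apply/eqP.
  have : (mup c P)%:Z - (mup c Q)%:Z = (mup c Rp)%:Z - (mup c S)%:Z by rewrite e1 e2.
  lia.
- move=> /andP[P0 /andP[Q0 /andP[R0 /andP[S0 /andP[/eqP e /andP[hlt /andP[B0 /eqP e3]]]]]]].
  split => //; split => //; split.
    exists ((mup c P)%:Z - (mup c Q)%:Z); rewrite (negPf P0) (negPf R0); split => //.
      split; first by congr Some; lia.
    by rewrite subr_lt0 ltz_nat.
  by rewrite (negPf B0) e3 subrr.
Qed.

Definition Cc P Q Rp S c : R :=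
  if badm c P Q Rp S then 0 else SignPQ (P * S + Q * Rp) (Q * S) c.

Lemma right_loc P Q Rp S c : (P != 0) || (Q != 0) -> (Rp != 0) || (S != 0) ->
  Ind_plus (P * Rp - Q * S) (P * S + Q * Rp) c - Ind_plus P Q c - Ind_plus Rp S c =
  - 2^-1 * Num.sg (Pval ((P * S + Q * Rp) * (Q * S)) c) + 2^-1 * Cc P Q Rp S c.
Proof.
move=> h1 h2; rewrite !Ind_plusE coreR // /Cc SignPQE; ring.
Qed.

Lemma left_loc P Q Rp S c : (P != 0) || (Q != 0) -> (Rp != 0) || (S != 0) ->
  Ind_minus (P * Rp - Q * S) (P * S + Q * Rp) c - Ind_minus P Q c - Ind_minus Rp S c =
  - 2^-1 * Num.sg (Pl ((P * S + Q * Rp) * (Q * S)) c) + 2^-1 * Cc P Q Rp S c.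
Proof.
move=> h1 h2; rewrite !Ind_minusE coreL // /Cc SignPQE SG_lr; ring.
Qed.

Lemma pt_loc P Q Rp S c : (P != 0) || (Q != 0) -> (Rp != 0) || (S != 0) ->
  Ind_pt (P * Rp - Q * S) (P * S + Q * Rp) c - Ind_pt P Q c - Ind_pt Rp S c =
  - 2^-1 * Num.sg (Pval ((P * S + Q * Rp) * (Q * S)) c)
  + 2^-1 * Num.sg (Pl ((P * S + Q * Rp) * (Q * S)) c).
Proof.
move=> h1 h2; have := right_loc c h1 h2; have := left_loc c h1 h2.
rewrite /Ind_pt => e1 e2.
set a1 := Ind_plus _ _ c in e2 *; set a2 := Ind_plus P Q c in e2 *.
set a3 := Ind_plus Rp S c in e2 *.
set b1 := Ind_minus _ _ c in e1 *; set b2 := Ind_minus P Q c in e1 *.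
set b3 := Ind_minus Rp S c in e1 *.
have -> : a1 - b1 - (a2 - b2) - (a3 - b3) = (a1 - a2 - a3) - (b1 - b2 - b3) by ring.
rewrite e1 e2; ring.
Qed.

End Bridge.


Section Global.
Variable R : rcfType.
Implicit Types (X Y U T P Q Rp S : {poly R}) (x a b c z : R).

Lemma Ind_pt_nroot X Y z : Y != 0 -> ~~ root Y z -> Ind_pt X Y z = 0.
Proof.
move=> Y0 nr; rewrite /Ind_pt Ind_plusE Ind_minusE /IP (mupNroot nr) ltn0 !andbF.
by rewrite subrr.
Qed.

Lemma Ind_pt_Y0 X z : Ind_pt X 0 z = 0.
Proof. by rewrite /Ind_pt Ind_plusE Ind_minusE IP0r IP0r subrr. Qed.

Lemma sum_reindex X Y T a b : T != 0 -> (Y != 0 -> forall z, root Y z -> root T z) ->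
  \sum_(z <- roots Y a b) Ind_pt X Y z = \sum_(z <- roots T a b) Ind_pt X Y z.
Proof.
move=> T0 hYT; have [->|Y0] := eqVneq Y 0.
  by rewrite roots0 big_nil big1_seq // => z _; apply: Ind_pt_Y0.
rewrite [RHS](bigID (fun z => z \in roots Y a b)) /=.
rewrite [X in _ = _ + X]big1_seq ?addr0; last first.
  move=> z /andP[hz zin]; apply: Ind_pt_nroot => //.
  apply: contra hz => rz; apply: root_in_roots => //; exact: (roots_in zin).
rewrite -[RHS]big_filter; apply: perm_big.
apply: uniq_perm; [exact: uniq_roots | exact: filter_uniq (uniq_roots _ _ _) | ].
move=> z; rewrite mem_filter; apply/idP/andP => [zin|[]//]; split => //.
move: (zin); rewrite !in_roots => /and3P[rz zab _]; rewrite (hYT Y0 _ rz) zab T0.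
by [].
Qed.

Lemma K_sign U a c : a < c -> (forall y, a < y -> y < c -> ~~ root U y) ->
  Num.sg (Pval U a) = Num.sg (Pl U c).
Proof.
move=> ac hno; have [->|U0] := eqVneq U 0; first by rewrite Pval0 Pl0.
have [r1 r1N E1] := decomp a U0; have [r2 r2N E2] := decomp c U0.
rewrite /Pl (Pval_char r1N E1) (Pval_char r2N E2).
set m := (a + c) / 2.
have am : a < m by rewrite /m; lra.
have mc : m < c by rewrite /m; lra.
have h1 : Num.sg r1.[m] = Num.sg r1.[a].
  apply: (@polyrN0_itv _ `[a, m]); last 2 first.
  - by rewrite in_itv /= lexx ltW.
  - by rewrite in_itv /= lexx ltW.
  move=> y; rewrite in_itv /= => /andP[ay ym].
  have [<-|ay'] := eqVneq a y; first exact: r1N.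
  have ay2 : a < y by rewrite lt_neqAle ay' ay.
  have := hno y ay2 (le_lt_trans ym mc); rewrite E1 rootM negb_or.
  by case/andP.
have h2 : Num.sg r2.[m] = Num.sg r2.[c].
  apply: (@polyrN0_itv _ `[m, c]); last 2 first.
  - by rewrite in_itv /= lexx ltW.
  - by rewrite in_itv /= lexx ltW.
  move=> y; rewrite in_itv /= => /andP[my yc].
  have [->|yc'] := eqVneq y c; first exact: r2N.
  have yc2 : y < c by rewrite lt_neqAle yc' yc.
  have := hno y (lt_le_trans am my) yc2; rewrite E2 rootM negb_or.
  by case/andP.
have eU1 : Num.sg U.[m] = Num.sg r1.[m].
  have pos : 0 < m - a by rewrite subr_gt0.
  by rewrite {1}E1 hornerM horner_exp hornerXsubC sgrM sgrX (gtr0_sg pos) expr1n mulr1.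
have eU2 : Num.sg U.[m] = (-1) ^+ mup c U * Num.sg r2.[m].
  have neg : m - c < 0 by rewrite subr_lt0.
  by rewrite {1}E2 hornerM horner_exp hornerXsubC sgrM sgrX (ltr0_sg neg) mulrC.
by rewrite -h1 -eU1 eU2 h2 sgrM sg_sign.
Qed.

Lemma tel_gen U (L : seq R) a b : a < b -> path <%R a L -> all (fun z => z < b) L ->
  (forall y, a < y -> y < b -> root U y -> y \in L) ->
  \sum_(z <- L) (Num.sg (Pval U z) - Num.sg (Pl U z)) =
  Num.sg (Pl U b) - Num.sg (Pval U a).
Proof.
elim: L a => [|z L IH] a ab hp hall hcov.
  rewrite big_nil (K_sign ab) ?subrr // => y ay yb; apply/negP => /(hcov y ay yb).
  by rewrite in_nil.
move: hp => /= /andP[az hp]; move: hall => /= /andP[zb hall].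
have hmin : all (fun w => z < w) L by apply: (order_path_min (@lt_trans _ _)).
rewrite big_cons (IH z zb hp hall).
  rewrite (K_sign az); first by ring.
  move=> y ay yz; apply/negP => /(hcov y ay (lt_trans yz zb)).
  rewrite in_cons => /orP[/eqP yz'|yL]; first by move: yz; rewrite yz' ltxx.
  by move/allP: hmin => /(_ y yL) zy; move: (lt_trans yz zy); rewrite ltxx.
move=> y zy yb ry; have := hcov y (lt_trans az zy) yb ry.
rewrite in_cons => /orP[/eqP yz'|//]; by move: zy; rewrite yz' ltxx.
Qed.

Lemma tel U T a b : a < b -> T != 0 -> (U != 0 -> forall z, root U z -> root T z) ->
  \sum_(z <- roots T a b) (Num.sg (Pval U z) - Num.sg (Pl U z)) =
  Num.sg (Pl U b) - Num.sg (Pval U a).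
Proof.
move=> ab T0 hUT; have [->|U0] := eqVneq U 0.
  by rewrite Pval0 Pl0 sgr0 subrr big1 // => z _; rewrite Pval0 Pl0 sgr0 subrr.
apply: (@tel_gen U (roots T a b) a b) => //.
- exact: path_roots.
- by apply/allP => z /roots_in; rewrite in_itv /= => /andP[_ h].
- move=> y ay yb ry; apply: root_in_roots => //; first by rewrite in_itv /= ay yb.
  exact: hUT.
Qed.

End Global.


Section Final.
Variable R : rcfType.
Implicit Types (X Y U T P Q Rp S : {poly R}) (x a b c z : R).

Definition nz (Z : {poly R}) := if Z == 0 then 1 else Z.
Lemma nz_neq0 Z : nz Z != 0.
Proof. by rewrite /nz; case: ifP => [_|/negbT //]; rewrite oner_eq0. Qed.
Lemma nz_root Z z : Z != 0 -> root Z z -> root (nz Z) z.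
Proof. by move=> Z0; rewrite /nz (negPf Z0). Qed.

Lemma gen P Q Rp S a b : (P != 0) || (Q != 0) -> (Rp != 0) || (S != 0) -> a < b ->
  Ind_ab (P * Rp - Q * S) (P * S + Q * Rp) a b =
  Ind_ab P Q a b + Ind_ab Rp S a b + 2^-1 * Cc P Q Rp S a - 2^-1 * Cc P Q Rp S b.
Proof.
move=> hPQ hRS ab.
pose T := nz (P * S + Q * Rp) * nz Q * nz S.
have T0 : T != 0 by rewrite !mulf_neq0 ?nz_neq0.
have cB : P * S + Q * Rp != 0 -> forall z, root (P * S + Q * Rp) z -> root T z.
  by move=> B0 z rz; rewrite /T !rootM (nz_root B0 rz).
have cQ : Q != 0 -> forall z, root Q z -> root T z.
  by move=> Q0 z rz; rewrite /T !rootM (nz_root Q0 rz) orbT.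
have cS : S != 0 -> forall z, root S z -> root T z.
  by move=> S0 z rz; rewrite /T !rootM (nz_root S0 rz) orbT.
have cU : (P * S + Q * Rp) * (Q * S) != 0 ->
    forall z, root ((P * S + Q * Rp) * (Q * S)) z -> root T z.
  move=> U0 z hz; rewrite mulf_eq0 negb_or in U0; case/andP: U0 => B0.
  rewrite mulf_eq0 negb_or => /andP[Q0 S0].
  rewrite !rootM in hz; case/orP: hz => [rb|/orP[rq|rs]].
  - exact: (cB B0 z rb).
  - exact: (cQ Q0 z rq).
  - exact: (cS S0 z rs).
rewrite /Ind_ab (sum_reindex _ _ _ T0 cB) (sum_reindex _ _ _ T0 cQ) (sum_reindex _ _ _ T0 cS).
have hr := right_loc a hPQ hRS.
have hl := left_loc b hPQ hRS.
have hs : \sum_(z <- roots T a b) Ind_pt (P * Rp - Q * S) (P * S + Q * Rp) z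
             - \sum_(z <- roots T a b) Ind_pt P Q z - \sum_(z <- roots T a b) Ind_pt Rp S z
   = - 2^-1 * \sum_(z <- roots T a b)
       (Num.sg (Pval ((P * S + Q * Rp) * (Q * S)) z) - Num.sg (Pl ((P * S + Q * Rp) * (Q * S)) z)).
  rewrite -!sumrB mulr_sumr; apply: eq_bigr => z _; rewrite pt_loc //; ring.
rewrite (tel ab T0 cU) in hs.
lra.
Qed.

Lemma Cc_bad P Q Rp S c : bad_number P Q Rp S c -> Cc P Q Rp S c = 0.
Proof. by move/badE => h; rewrite /Cc h. Qed.

Lemma Cc_nbad P Q Rp S c : ~ bad_number P Q Rp S c ->
  Cc P Q Rp S c = SignPQ (P * S + Q * Rp) (Q * S) c.
Proof. by move=> nb; rewrite /Cc; case: ifP => // /badE. Qed.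

End Final.

Unset Implicit Arguments.

Theorem proposition2p4 (R : rcfType) (P Q Rp S : {poly R}) (a b : R) :
  ~ (P = 0 /\ Q = 0) -> ~ (Rp = 0 /\ S = 0) -> a < b ->
  (bad_number P Q Rp S a -> ~ bad_number P Q Rp S b ->
     Ind_ab (P * Rp - Q * S) (P * S + Q * Rp) a b
     = Ind_ab P Q a b + Ind_ab Rp S a b - 2^-1 * SignPQ (P * S + Q * Rp) (Q * S) b) /\
  (bad_number P Q Rp S b -> ~ bad_number P Q Rp S a ->
     Ind_ab (P * Rp - Q * S) (P * S + Q * Rp) a b
     = Ind_ab P Q a b + Ind_ab Rp S a b + 2^-1 * SignPQ (P * S + Q * Rp) (Q * S) a) /\
  (bad_number P Q Rp S a -> bad_number P Q Rp S b ->
     Ind_ab (P * Rp - Q * S) (P * S + Q * Rp) a b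
     = Ind_ab P Q a b + Ind_ab Rp S a b).
Proof.
move=> nPQ nRS ab.
have hPQ : (P != 0) || (Q != 0).
  have [P0|P0] := eqVneq P 0; last by [].
  have [Q0|Q0] := eqVneq Q 0; last by rewrite orbT.
  by exfalso; apply: nPQ.
have hRS : (Rp != 0) || (S != 0).
  have [P0|P0] := eqVneq Rp 0; last by [].
  have [Q0|Q0] := eqVneq S 0; last by rewrite orbT.
  by exfalso; apply: nRS.
have G := gen hPQ hRS ab.
split; [|split] => h1 h2.
- by rewrite G (Cc_bad h1) (Cc_nbad h2); ring.
- by rewrite G (Cc_bad h1) (Cc_nbad h2); ring.
- by rewrite G (Cc_bad h1) (Cc_bad h2); ring.
Qed.
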